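(* Let $w\in W$ and $\alpha\in\Phi^+\cap w\Phi^-$. The following are equivalent: (1) $w^{-1}\alpha\in-\Pi$; (2) $\alpha$ is a maximal element of $\Phi^+\cap w\Phi^-$ with respect to $\prec_w$; (3) there are no $\beta,\gamma\in\Phi^+\cap w\Phi^-$ with $\alpha=\beta+\gamma$, and there is no $\beta\in\Phi^+\cap w\Phi^-$ with $\alpha\prec\beta$, $(\alpha,\beta)=1$ and $\beta-\alpha\notin\Phi^+\cap w\Phi^-$.
   Context: $\Phi$ is a simply laced root system with positive roots $\Phi^+$, $\Phi^-=-\Phi^+$, simple roots $\Pi$, Weyl group $W$; the scalar product is normalized so that $(\alpha,\alpha)=2$ for all roots. For roots, $\alpha\prec\beta$ means $\beta-\alpha$ is a nonzero sum of positive roots; for $w\in W$, $\alpha\prec_w\beta$ means $w^{-1}\alpha\prec w^{-1}\beta$. *)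

(* Defs.v *)
From HB Require Import structures.
From mathcomp Require Import all_boot all_order all_algebra.
Set Implicit Arguments. Unset Strict Implicit. Unset Printing Implicit Defensive.
Import Order.TTheory GRing.Theory Num.Theory.
Local Open Scope ring_scope.

Section RootSystems.
Variables (R : realFieldType) (n : nat).
Notation V := 'rV[R]_n.

Definition dot (x y : V) : R := (x *m y^T) 0 0.

(* Reflection in the root a, with (a,a) = 2: s_a(x) = x - (x,a) a. *)
Definition refl (a x : V) : V := x - dot x a *: a.

(* A Weyl group element is given as a word l = [a1;...;ak] of roots:
   w = s_{a1} o ... o s_{ak};  its inverse is s_{ak} o ... o s_{a1}. *)
Definition wact (l : seq V) (x : V) : V := foldr refl x l.
Definition winv (l : seq V) (x : V) : V := wact (rev l) x.
Definition in_weyl (Phi : seq V) (l : seq V) : bool := all (mem Phi) l.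

Definition simply_laced_root_system (Phi Pi : seq V) : Prop :=
  [/\ (0 : V) \notin Phi,
      (forall a, a \in Phi -> dot a a = 2),
      (forall a b, a \in Phi -> b \in Phi -> refl a b \in Phi),
      (forall a b, a \in Phi -> b \in Phi -> exists z : int, dot a b = z%:~R) &
      [/\ {subset Pi <= Phi},
      free Pi &
      forall x, x \in Phi -> exists c : 'I_(size Pi) -> nat,
        x = \sum_(i < size Pi) (c i)%:R *: Pi`_i \/
        x = - \sum_(i < size Pi) (c i)%:R *: Pi`_i]].

Definition posroot (Phi Pi : seq V) (x : V) : Prop :=
  x \in Phi /\ exists c : 'I_(size Pi) -> nat,
    x = \sum_(i < size Pi) (c i)%:R *: Pi`_i.

Definition negroot (Phi Pi : seq V) (x : V) : Prop := posroot Phi Pi (- x).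

Definition rprec (Phi Pi : seq V) (a b : V) : Prop :=
  exists s : seq V, [/\ s != [::], forall x, x \in s -> posroot Phi Pi x
                       & b - a = \sum_(x <- s) x].

Definition rprec_w (Phi Pi : seq V) (l : seq V) (a b : V) : Prop :=
  rprec Phi Pi (winv l a) (winv l b).

Definition inN (Phi Pi : seq V) (l : seq V) (b : V) : Prop :=
  posroot Phi Pi b /\ exists g, negroot Phi Pi g /\ b = wact l g.

End RootSystems.

(* Main.v *)
Require Import Defs.
From HB Require Import structures.
From mathcomp Require Import all_boot all_order all_algebra.
From mathcomp Require Import ring lra zify.
Import Order.TTheory GRing.Theory Num.Theory.
Local Open Scope ring_scope.
Set Implicit Arguments. Unset Strict Implicit.

Section S.
Variables (R : realFieldType) (n : nat).
Notation V := 'rV[R]_n.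

Lemma dotE (x y : V) : dot x y = \sum_j x 0 j * y 0 j.
Proof. by rewrite /dot !mxE; apply: eq_bigr => j _; rewrite !mxE. Qed.

Lemma dotC (x y : V) : dot x y = dot y x.
Proof. by rewrite !dotE; apply: eq_bigr => j _; rewrite mulrC. Qed.

Lemma dotDl (x y z : V) : dot (x + y) z = dot x z + dot y z.
Proof. by rewrite !dotE -big_split; apply: eq_bigr => j _; rewrite !mxE mulrDl. Qed.

Lemma dotNl (x z : V) : dot (- x) z = - dot x z.
Proof. by rewrite !dotE -sumrN; apply: eq_bigr => j _; rewrite !mxE mulNr. Qed.

Lemma dotZl a (x z : V) : dot (a *: x) z = a * dot x z.
Proof. by rewrite !dotE mulr_sumr; apply: eq_bigr => j _; rewrite !mxE mulrA. Qed.

Lemma dotDr (x y z : V) : dot z (x + y) = dot z x + dot z y.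
Proof. by rewrite dotC dotDl !(dotC z). Qed.
Lemma dotNr (x z : V) : dot z (- x) = - dot z x.
Proof. by rewrite dotC dotNl dotC. Qed.
Lemma dotZr a (x z : V) : dot z (a *: x) = a * dot z x.
Proof. by rewrite dotC dotZl dotC. Qed.
Lemma dotBl (x y z : V) : dot (x - y) z = dot x z - dot y z.
Proof. by rewrite dotDl dotNl. Qed.
Lemma dotBr (x y z : V) : dot z (x - y) = dot z x - dot z y.
Proof. by rewrite dotDr dotNr. Qed.

Lemma dot_ge0 (x : V) : 0 <= dot x x.
Proof. by rewrite dotE; apply: sumr_ge0 => j _; rewrite -expr2 sqr_ge0. Qed.

Lemma dot_eq0 (x : V) : dot x x = 0 -> x = 0.
Proof.
rewrite dotE => /eqP; rewrite psumr_eq0 => [/allP H|j _]; last by rewrite -expr2 sqr_ge0.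
apply/rowP => j; rewrite mxE.
have := H j (mem_index_enum j); rewrite /= mulf_eq0 orbb => /eqP //.
Qed.

Lemma dot_sum (I : Type) (r : seq I) (F : I -> V) z :
  dot (\sum_(i <- r) F i) z = \sum_(i <- r) dot (F i) z.
Proof.
elim: r => [|a r IH]; first by rewrite !big_nil dotE big1 // => j _; rewrite mxE mul0r.
by rewrite !big_cons dotDl IH.
Qed.


Lemma refl_dota (a x : V) : dot a a = 2 -> dot (refl a x) a = - dot x a.
Proof. move=> Ha; rewrite /refl dotBl dotZl Ha; ring. Qed.

Lemma reflK (a x : V) : dot a a = 2 -> refl a (refl a x) = x.
Proof.
move=> Ha; rewrite {1}/refl refl_dota // /refl scaleNr opprK.
by rewrite subrK.
Qed.

Lemma reflD (a x y : V) : refl a (x + y) = refl a x + refl a y.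
Proof. by rewrite /refl dotDl scalerDl opprD addrACA. Qed.

Lemma reflN (a x : V) : refl a (- x) = - refl a x.
Proof. by rewrite /refl dotNl scaleNr opprB opprK addrC. Qed.

Lemma refl_dot (a x y : V) : dot a a = 2 -> dot (refl a x) (refl a y) = dot x y.
Proof.
move=> Ha; rewrite /refl dotBl !dotBr !dotZl !dotZr Ha (dotC a y); ring.
Qed.

Lemma reflnn (x : V) : dot x x = 2 -> refl x x = - x.
Proof.
move=> Hx; rewrite /refl Hx.
have -> : (2 : R) *: x = x + x by rewrite scalerDl scale1r.
by rewrite opprD addrA subrr sub0r.
Qed.
End S.
Section W.
Variables (R : realFieldType) (n : nat).
Notation V := 'rV[R]_n.

Lemma wactD (l : seq V) x y : wact l (x + y) = wact l x + wact l y.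
Proof. by elim: l => [|a l IH] //=; rewrite IH reflD. Qed.

Lemma wactN (l : seq V) x : wact l (- x) = - wact l x.
Proof. by elim: l => [|a l IH] //=; rewrite IH reflN. Qed.

Lemma wactB (l : seq V) x y : wact l (x - y) = wact l x - wact l y.
Proof. by rewrite wactD wactN. Qed.

Lemma wact_dot (l : seq V) x y : (forall a, a \in l -> dot a a = 2) ->
  dot (wact l x) (wact l y) = dot x y.
Proof.
elim: l => [|a l IH] H //=; rewrite refl_dot ?H ?mem_head // IH // => b Hb.
by apply: H; rewrite in_cons Hb orbT.
Qed.

Lemma wact_in (Phi l : seq V) x :
  (forall a b, a \in Phi -> b \in Phi -> refl a b \in Phi) ->
  all (mem Phi) l -> x \in Phi -> wact l x \in Phi.
Proof.
move=> Hr; elim: l => [|a l IH] //= /andP [Ha Hl] Hx.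
by apply: Hr => //; apply: IH.
Qed.

Lemma winv_cons (a : V) l x : winv (a :: l) x = winv l (refl a x).
Proof. by rewrite /winv rev_cons /wact foldr_rcons. Qed.

Lemma winvK (l : seq V) x : (forall a, a \in l -> dot a a = 2) ->
  wact l (winv l x) = x.
Proof.
elim: l x => [|a l IH] x H //=; rewrite winv_cons IH ?reflK ?H ?mem_head //.
by move=> b Hb; apply: H; rewrite in_cons Hb orbT.
Qed.

Lemma wactK (l : seq V) x : (forall a, a \in l -> dot a a = 2) ->
  winv l (wact l x) = x.
Proof.
elim: l x => [|a l IH] x H //=; rewrite winv_cons reflK ?H ?mem_head // IH //.
by move=> b Hb; apply: H; rewrite in_cons Hb orbT.
Qed.
End W.
Section C.
Variables (R : realFieldType) (n : nat).
Notation V := 'rV[R]_n.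
Variables (Phi Pi : seq V).
Hypotheses (H0 : (0:V) \notin Phi) (H2 : forall a, a \in Phi -> dot a a = 2)
  (Hrefl : forall a b, a \in Phi -> b \in Phi -> refl a b \in Phi)
  (Hint : forall a b, a \in Phi -> b \in Phi -> exists z : int, dot a b = z%:~R)
  (HPi : {subset Pi <= Phi}) (Hfree : free Pi)
  (Hdec : forall x, x \in Phi -> exists c : 'I_(size Pi) -> nat,
        x = \sum_(i < size Pi) (c i)%:R *: Pi`_i \/
        x = - \sum_(i < size Pi) (c i)%:R *: Pi`_i).

Definition comb (c : 'I_(size Pi) -> nat) : V := \sum_(i < size Pi) (c i)%:R *: Pi`_i.

Lemma combD c d : comb (fun i => (c i + d i)%N) = comb c + comb d.
Proof. by rewrite /comb -big_split; apply: eq_bigr => i _; rewrite natrD scalerDl. Qed.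

Lemma comb_zero c : (forall i, c i = 0%N) -> comb c = 0.
Proof. by move=> Hc; rewrite /comb big1 // => i _; rewrite Hc scale0r. Qed.

Lemma comb_inj c d : comb c = comb d -> forall i, c i = d i.
Proof.
move=> E i; have Hf : free (in_tuple Pi) := Hfree.
move/freeP: Hf => /(_ (fun i => (c i)%:R - (d i)%:R)) H.
have : (c i)%:R - (d i)%:R = 0 :> R.
  apply: H; move: E; rewrite /comb => E.
  under eq_bigr => j _ do rewrite scalerBl.
  by rewrite sumrB E subrr.
by move/eqP; rewrite subr_eq0 eqr_nat => /eqP.
Qed.

Lemma comb_e (j : 'I_(size Pi)) : Pi`_j = comb (fun i => nat_of_bool (i == j)).
Proof.
rewrite /comb (bigD1 j) //= eqxx scale1r big1 ?addr0 // => i /negbTE ->.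
by rewrite scale0r.
Qed.

Lemma comb_split (j : 'I_(size Pi)) c d : Pi`_j = comb c + comb d ->
  (forall i, c i = 0%N) \/ (forall i, d i = 0%N).
Proof.
rewrite comb_e -combD => /comb_inj E.
have Hi : forall i, i != j -> c i = 0%N /\ d i = 0%N.
  move=> i /negbTE Hij; have := E i; rewrite Hij /=; lia.
have := E j; rewrite eqxx /= => Ej.
case Hcj: (c j) => [|k].
  by left => i; case: (eqVneq i j) => [->|/Hi []].
right => i; case: (eqVneq i j) => [->|/Hi []] //; lia.
Qed.

Lemma comb_nz c x : x \in Phi -> x = comb c -> exists i, c i <> 0%N.
Proof.
move=> Hx Ex; case: (boolP [exists i, c i != 0%N]) => [/existsP [i /eqP Hi]|H].
  by exists i.
have : x = 0 by rewrite Ex comb_zero // => i; apply/eqP; move/existsPn: H => /(_ i); rewrite negbK.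
by move=> E; move: Hx; rewrite E (negbTE H0).
Qed.

Lemma PhiN x : x \in Phi -> - x \in Phi.
Proof. by move=> Hx; rewrite -reflnn ?H2 // Hrefl. Qed.

Lemma pos_or_neg x : x \in Phi -> posroot Phi Pi x \/ negroot Phi Pi x.
Proof.
move=> Hx; have [c [E|E]] := Hdec Hx.
  by left; split => //; exists c.
by right; split; [apply: PhiN | exists c; rewrite E opprK].
Qed.

Lemma pos_not_neg x : posroot Phi Pi x -> negroot Phi Pi x -> False.
Proof.
move=> [Hx [c Ec]] [_ [d Ed]].
change (x = comb c) in Ec; change (- x = comb d) in Ed.
have E : comb (fun i => (c i + d i)%N) = comb (fun _ => 0%N).
  by rewrite combD -Ec -Ed subrr comb_zero.
have := comb_inj E => Ez.
have : x = 0 by rewrite Ec comb_zero // => i; have := Ez i; lia.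
by move=> E0; move: Hx; rewrite E0 (negbTE H0).
Qed.

Lemma posD x y : posroot Phi Pi x -> posroot Phi Pi y -> x + y \in Phi ->
  posroot Phi Pi (x + y).
Proof.
move=> [_ [c Ec]] [_ [d Ed]] H; split => //; exists (fun i => (c i + d i)%N).
change (x = comb c) in Ec; change (y = comb d) in Ed.
by rewrite -/(comb _) combD -Ec -Ed.
Qed.

Lemma posPi (j : 'I_(size Pi)) : posroot Phi Pi Pi`_j.
Proof. by split; [apply: HPi; apply: mem_nth | exists (fun i => nat_of_bool (i == j)); apply: comb_e]. Qed.

Lemma rprec_comb a b : rprec Phi Pi a b -> exists c, b - a = comb c /\ exists i, c i <> 0%N.
Proof.
move=> [s [Hs Hpos ->]].
elim: s Hs Hpos => [|x s IH] // _ Hpos.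
have [Hx [cx Ecx]] := Hpos x (mem_head _ _).
have [i Hi] := comb_nz Hx Ecx.
have [cs Ecs] : exists cs, \sum_(y <- s) y = comb cs.
  case: s IH Hpos => [|y s] IH Hpos.
    by exists (fun _ => 0%N); rewrite big_nil comb_zero.
  have Hp' : forall z, z \in y :: s -> posroot Phi Pi z.
    by move=> z Hz; apply: Hpos; rewrite in_cons Hz orbT.
  have [cs [Ecs _]] := IH isT Hp'.
  by exists cs.
exists (fun k => (cx k + cs k)%N); change (x = comb cx) in Ecx; rewrite big_cons combD -Ecx -Ecs; split => //.
by exists i; lia.
Qed.

Lemma rprec1 a b x : posroot Phi Pi x -> b - a = x -> rprec Phi Pi a b.
Proof.
move=> Hx E; exists [:: x]; split => //; first by move=> y; rewrite inE => /eqP ->.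
by rewrite big_seq1.
Qed.


Lemma factB g : posroot Phi Pi g -> g \notin Pi ->
  exists j : 'I_(size Pi), posroot Phi Pi (g - Pi`_j).
Proof.
move=> [Hg [c Ec]] Hn.
change (g = comb c) in Ec.
have Hgg : dot g g = 2 := H2 Hg.
have [j Hj] : exists j : 'I_(size Pi), 0 < dot Pi`_j g.
  case: (boolP [exists j : 'I_(size Pi), 0 < dot Pi`_j g]) => [/existsP [j Hj]|/existsPn H];
    first by exists j.
  exfalso; have : dot g g <= 0.
    rewrite {1}Ec /comb dot_sum; apply: sumr_le0 => i _; rewrite dotZl.
    by apply: mulr_ge0_le0; [exact: ler0n | rewrite leNgt H].
  by rewrite Hgg leNgt => /negP; apply; rewrite ltr0n.
set s := Pi`_j.
have Hs : s \in Phi by apply: HPi; apply: mem_nth.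
have [z Hz] := Hint Hs Hg.
have Hle : dot s g <= 2.
  have := dot_ge0 (g - s); rewrite dotBl !dotBr Hgg (H2 Hs) (dotC g s); lra.
have Hne : dot s g != 2.
  apply/negP => /eqP E; apply: (negP Hn).
  have : g - s = 0.
    by apply: dot_eq0; rewrite dotBl !dotBr Hgg (H2 Hs) (dotC g s) E; ring.
  by move/eqP; rewrite subr_eq0 => /eqP ->; exact: mem_nth.
have E1 : dot s g = 1.
  rewrite Hz in Hj Hle Hne *.
  move: Hj Hle Hne; rewrite -[2 : R]/((2%:Z)%:~R) ltr0z ler_int eqr_int => ? ? ?.
  have -> : z = 1 by lia.
  by [].
have Er : refl s g = g - s by rewrite /refl dotC E1 scale1r.
have Hgs : g - s \in Phi by rewrite -Er Hrefl.
exists j; case: (pos_or_neg Hgs) => // [[_ [d Ed]]].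
change (-(g - s) = comb d) in Ed.
have : s = comb c + comb d by rewrite -Ec -Ed opprB addrCA subrr addr0.
case/comb_split => Hz0.
  by move: Hg; rewrite Ec comb_zero // (negbTE H0).
have : g = s by apply/eqP; rewrite -subr_eq0 -oppr_eq0 Ed comb_zero.
by move=> E; move: Hn; rewrite E mem_nth.
Qed.

Variables (l : seq V).
Hypothesis Hl : all (mem Phi) l.

Lemma H2l a : a \in l -> dot a a = 2.
Proof. by move=> Ha; apply: H2; move/allP: Hl => /(_ a Ha). Qed.

Lemma H2rl a : a \in rev l -> dot a a = 2.
Proof. by rewrite mem_rev; apply: H2l. Qed.

Lemma wPhi x : x \in Phi -> wact l x \in Phi.
Proof. exact: wact_in. Qed.

Lemma uPhi x : x \in Phi -> winv l x \in Phi.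
Proof. by apply: wact_in; rewrite // all_rev. Qed.

Lemma uD x y : winv l (x + y) = winv l x + winv l y.
Proof. exact: wactD. Qed.
Lemma uN x : winv l (- x) = - winv l x.
Proof. exact: wactN. Qed.

Lemma inN_iff b : inN Phi Pi l b <-> posroot Phi Pi b /\ negroot Phi Pi (winv l b).
Proof.
split.
  move=> [Hb [g [Hg E]]]; split => //; rewrite E wactK //; exact: H2l.
move=> [Hb Hu]; split => //; exists (winv l b); split => //.
by rewrite winvK //; apply: H2l.
Qed.

Lemma inN_negw x : posroot Phi Pi x -> negroot Phi Pi (wact l x) -> inN Phi Pi l (- wact l x).
Proof.
move=> Hx Hw; apply/inN_iff; split => //.
rewrite uN wactK; last exact: H2l.
by rewrite /negroot opprK.
Qed.

Lemma not_inN_w x : posroot Phi Pi x -> ~ inN Phi Pi l (wact l x).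
Proof.
move=> Hx /inN_iff [_]; rewrite wactK; last exact: H2l.
exact: pos_not_neg.
Qed.

Variable alpha : V.
Hypothesis HA : inN Phi Pi l alpha.

Lemma HAp : posroot Phi Pi alpha.
Proof. by case/inN_iff: HA. Qed.
Lemma HAPhi : alpha \in Phi.
Proof. by case: HAp. Qed.
Lemma HAn : posroot Phi Pi (- winv l alpha).
Proof. by case/inN_iff: HA. Qed.

Lemma inPi x : x \in Pi -> exists j : 'I_(size Pi), Pi`_j = x.
Proof.
move=> Hx; have Hi : (index x Pi < size Pi)%N by rewrite index_mem.
by exists (Ordinal Hi); apply: nth_index.
Qed.

Lemma not_zero_Phi x : x \in Phi -> x = 0 -> False.
Proof. by move=> Hx E; move: Hx; rewrite E (negbTE H0). Qed.

Lemma one_two : - winv l alpha \in Pi ->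
  ~ exists beta, inN Phi Pi l beta /\ rprec_w Phi Pi l alpha beta.
Proof.
move=> HS [b [/inN_iff [Hb [Hub [d Ed]]] Hr]].
change (- winv l b = comb d) in Ed.
have [c [Ec [i Hi]]] := rprec_comb Hr.
have [j Ej] := inPi HS.
have : Pi`_j = comb c + comb d by rewrite -Ec -Ed Ej addrC addKr.
case/comb_split => Hz; first by apply: Hi.
by apply: (not_zero_Phi Hub); rewrite Ed comb_zero.
Qed.

Lemma one_three : - winv l alpha \in Pi ->
  (~ exists beta gamma, [/\ inN Phi Pi l beta, inN Phi Pi l gamma
                                 & alpha = beta + gamma]) /\
  (~ exists beta, [/\ inN Phi Pi l beta, rprec Phi Pi alpha beta,
                             dot alpha beta = 1 & ~ inN Phi Pi l (beta - alpha)]).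
Proof.
move=> HS; have [j Ej] := inPi HS; split.
  move=> [b [g [/inN_iff [_ [Hub [d1 E1]]] /inN_iff [_ [Hug [d2 E2]]] Ea]]].
  change (- winv l b = comb d1) in E1; change (- winv l g = comb d2) in E2.
  have : Pi`_j = comb d1 + comb d2 by rewrite Ej -E1 -E2 Ea uD opprD.
  case/comb_split => Hz.
    by apply: (not_zero_Phi Hub); rewrite E1 comb_zero.
  by apply: (not_zero_Phi Hug); rewrite E2 comb_zero.
move=> [b [/inN_iff [Hb [Hub [d Ed]]] Hr Hd Hn]].
change (- winv l b = comb d) in Ed.
have Er : refl alpha b = b - alpha by rewrite /refl dotC Hd scale1r.
have Hba : b - alpha \in Phi by rewrite -Er Hrefl //; [exact: HAPhi | case: Hb].
have [c [Ec _]] := rprec_comb Hr.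
have Hp : posroot Phi Pi (b - alpha) by split => //; exists c.
have Hu : winv l (b - alpha) \in Phi by apply: uPhi.
case: (pos_or_neg Hu) => [[_ [c' Ec']]|Hneg]; last by apply: Hn; apply/inN_iff.
change (winv l (b - alpha) = comb c') in Ec'.
have : Pi`_j = comb c' + comb d by rewrite -Ec' -Ed Ej uD uN addrC addKr.
case/comb_split => Hz.
  by apply: (not_zero_Phi Hu); rewrite Ec' comb_zero.
by apply: (not_zero_Phi Hub); rewrite Ed comb_zero.
Qed.

Lemma core d s : posroot Phi Pi d -> posroot Phi Pi s -> d + s \in Phi ->
  alpha = - (wact l d + wact l s) ->
  (exists beta, inN Phi Pi l beta /\ rprec_w Phi Pi l alpha beta) /\
  ((exists beta gamma, [/\ inN Phi Pi l beta, inN Phi Pi l gamma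
                                 & alpha = beta + gamma]) \/
  (exists beta, [/\ inN Phi Pi l beta, rprec Phi Pi alpha beta,
                             dot alpha beta = 1 & ~ inN Phi Pi l (beta - alpha)])).
Proof.
move=> Hd Hs Hds Ha.
have [HdP _] := Hd; have [HsP _] := Hs.
have Hsd : dot s d = -1.
  have := H2 Hds; rewrite dotDl !dotDr (H2 HdP) (H2 HsP) (dotC d s) => E; lra.
have Hua : winv l alpha = - (d + s).
  by rewrite Ha uN uD !wactK //; exact: H2l.
have Hdw : wact l d \in Phi by apply: wPhi.
have Hsw : wact l s \in Phi by apply: wPhi.
have Hboth : posroot Phi Pi (wact l d) -> posroot Phi Pi (wact l s) -> False.
  move=> Pd Ps; have Hp := posD Pd Ps.
  have : wact l d + wact l s \in Phi by rewrite -[_ + _]opprK -Ha; apply: PhiN; apply: HAPhi.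
  move/Hp => Hp'; apply: (pos_not_neg HAp); rewrite /negroot Ha opprK //.
have Hdot : forall x y, dot (wact l x) (wact l y) = dot x y.
  by move=> x y; apply: wact_dot; exact: H2l.
have HuwN : forall x, winv l (- wact l x) = - x.
  by move=> x; rewrite uN wactK //; exact: H2l.
case: (pos_or_neg Hsw) => Psw; case: (pos_or_neg Hdw) => Pdw.
- by exfalso; apply: Hboth.
- split.
    exists (- wact l d); split; first exact: inN_negw.
    by apply: (rprec1 Hs); rewrite /= HuwN Hua opprK addKr.
  right; exists (- wact l d); split; first exact: inN_negw.
  + by apply: (rprec1 Psw); rewrite Ha opprK addKr.
  + rewrite Ha dotNl dotNr opprK dotDl !Hdot (H2 HdP) Hsd; lra.
  + by rewrite Ha opprK addKr; apply: not_inN_w.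
- split.
    exists (- wact l s); split; first exact: inN_negw.
    by apply: (rprec1 Hd); rewrite /= HuwN Hua opprK [d + s]addrC addKr.
  right; exists (- wact l s); split; first exact: inN_negw.
  + by apply: (rprec1 Pdw); rewrite Ha opprK [wact l d + _]addrC addKr.
  + rewrite Ha dotNl dotNr opprK dotDl !Hdot (H2 HsP) (dotC d s) Hsd; lra.
  + by rewrite Ha opprK [wact l d + _]addrC addKr; apply: not_inN_w.
- split.
    exists (- wact l s); split; first exact: inN_negw.
    by apply: (rprec1 Hd); rewrite /= HuwN Hua opprK [d + s]addrC addKr.
  left; exists (- wact l d), (- wact l s); split; try exact: inN_negw.
  by rewrite Ha opprD.
Qed.

Lemma nonsimple : ~ (- winv l alpha \in Pi) ->
  (exists beta, inN Phi Pi l beta /\ rprec_w Phi Pi l alpha beta) /\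
  ((exists beta gamma, [/\ inN Phi Pi l beta, inN Phi Pi l gamma
                                 & alpha = beta + gamma]) \/
  (exists beta, [/\ inN Phi Pi l beta, rprec Phi Pi alpha beta,
                             dot alpha beta = 1 & ~ inN Phi Pi l (beta - alpha)])).
Proof.
move=> HS; have HS2 : - winv l alpha \notin Pi by apply/negP.
have [j Hd] := factB HAn HS2.
apply: (core Hd (posPi j)).
  by rewrite subrK; case: HAn.
by rewrite -wactD subrK -wactN opprK winvK //; exact: H2l.
Qed.

End C.

Theorem mainTheorem16 (R : realFieldType) (n : nat) (Phi Pi : seq 'rV[R]_n)
  (l : seq 'rV[R]_n) (alpha : 'rV[R]_n) :
  simply_laced_root_system Phi Pi ->
  in_weyl Phi l ->
  inN Phi Pi l alpha ->
  [/\ (- winv l alpha \in Pi) <->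
        (~ exists beta, inN Phi Pi l beta /\ rprec_w Phi Pi l alpha beta),
      (~ exists beta, inN Phi Pi l beta /\ rprec_w Phi Pi l alpha beta) <->
        ((~ exists beta gamma, [/\ inN Phi Pi l beta, inN Phi Pi l gamma
                                 & alpha = beta + gamma]) /\
         (~ exists beta, [/\ inN Phi Pi l beta, rprec Phi Pi alpha beta,
                             dot alpha beta = 1 & ~ inN Phi Pi l (beta - alpha)]))
    & (- winv l alpha \in Pi) <->
        ((~ exists beta gamma, [/\ inN Phi Pi l beta, inN Phi Pi l gamma
                                 & alpha = beta + gamma]) /\
         (~ exists beta, [/\ inN Phi Pi l beta, rprec Phi Pi alpha beta,
                             dot alpha beta = 1 & ~ inN Phi Pi l (beta - alpha)]))].
Proof.
move=> [H0 H2 Hrefl Hint [HPi Hfree Hdec]] Hl HA.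
case: (boolP (- winv l alpha \in Pi)) => HS.
  have o12 : ~ exists beta, inN Phi Pi l beta /\ rprec_w Phi Pi l alpha beta.
    by apply: one_two.
  have o13 := one_three H0 H2 Hrefl Hfree Hdec Hl HA HS.
  by split; split.
have [n2 n3] : (exists beta, inN Phi Pi l beta /\ rprec_w Phi Pi l alpha beta) /\
  ((exists beta gamma, [/\ inN Phi Pi l beta, inN Phi Pi l gamma
                                 & alpha = beta + gamma]) \/
  (exists beta, [/\ inN Phi Pi l beta, rprec Phi Pi alpha beta,
                             dot alpha beta = 1 & ~ inN Phi Pi l (beta - alpha)])).
  by apply: nonsimple => //; apply/negP.
split; split => // H; exfalso.
all: case: H => K1 K2; case: n3 => E; [exact: (K1 E) | exact: (K2 E)].
Qed.
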